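(* Let $H$ be a Hilbert space with orthonormal system $\{e_m\}_{m\ge1}$. For $n\in\mathbb N$ let $k_n:=[\sqrt n]$ and let $g_p(n)$, $p=1,\dots,2^{k_n}$, be the vertices of the unit cube in $\operatorname{span}\{e_{2(n+1)},\dots,e_{2(n+k_n)}\}$, i.e. all vectors $\sum_{j=1}^{k_n}a_je_{2(n+j)}$ with $a_j\in\{0,1\}$. Let $\gamma>0$ and let $(\varepsilon_n)$ be positive numbers with $ce^{-\gamma n^2}\le\varepsilon_n\le Ce^{-\gamma n^2}$ for some constants $0<c\le C$. Let $\mathcal B\subset H$ be a compact set such that $\varepsilon_ng_p(n)\in\mathcal B$ for all $n\ge n_0$ (some $n_0$) and all $p=1,\dots,2^{k_n}$. Then the log-doubling factor of $\mathcal B$ is infinite, i.e. $\dim_{Log-D}(\mathcal B)=\infty$.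
   Context: For a compact metric space $X$ and $B\subset X$, $N_\varepsilon(B,X)$ is the minimal number of $\varepsilon$-balls of $X$ covering $B$; $D_\varepsilon(X):=\sup_{x\in X}N_{\varepsilon/2}(B(\varepsilon,x),X)$ where $B(r,x)$ is the ball of radius $r$ in $X$ centered at $x$; and $\dim_{Log-D}(X):=\limsup_{\varepsilon\to0}\frac{\log D_\varepsilon(X)}{\log\log(1/\varepsilon)}$. *)

(* Defs.v *)
From HB Require Import structures.
From mathcomp Require Import all_boot all_order all_algebra.
From mathcomp Require Import all_classical all_reals all_analysis.
From Stdlib Require Import PeanoNat.
Set Implicit Arguments. Unset Strict Implicit. Unset Printing Implicit Defensive.
Import Order.TTheory GRing.Theory Num.Theory.
Import numFieldNormedType.Exports.
Local Open Scope classical_set_scope.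
Local Open Scope ring_scope.

Section LogDoubling.
Variables (R : realType) (V : pseudoMetricType R).

Definition covers (X A : set V) (r : R) (s : seq V) : Prop :=
  (forall x, x \in s -> X x) /\ (forall y, A y -> exists2 x, x \in s & ball x r y).

Definition cover_num (r : R) (A X : set V) : \bar R :=
  ereal_inf [set ((size s)%:R)%:E | s in [set s | covers X A r s]].

Definition ballX (X : set V) (r : R) (x : V) : set V := X `&` ball x r.

Definition doubling (X : set V) (eps : R) : \bar R :=
  ereal_sup [set cover_num (eps / 2) (ballX X eps x) X | x in X].

Definition logD_ratio (X : set V) (eps : R) : \bar R :=
  if doubling X eps is +oo%E then +oo%E
  else (ln (fine (doubling X eps)) / ln (ln eps^-1))%:E.

(** dim_{Log-D}(X) := limsup_{eps -> 0+} log D_eps(X) / log log (1/eps) *)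
Definition dimLogD (X : set V) : \bar R :=
  ereal_inf [set ereal_sup [set logD_ratio X eps | eps in [set eps | 0 < eps < d]]
            | d in [set d : R | 0 < d]].

End LogDoubling.

(** real inner product inducing the norm of V (V complete = Hilbert space) *)
Definition is_inner_product (R : realType) (V : normedModType R)
    (inner : V -> V -> R) : Prop :=
  [/\ forall x y, inner x y = inner y x,
      forall a x y z, inner (a *: x + y) z = a * inner x z + inner y z
    & forall x, `|x| = Num.sqrt (inner x x)].

Definition kn (n : nat) : nat := Nat.sqrt n.

Definition cube_vertex (R : realType) (V : normedModType R) (e : nat -> V)
    (n : nat) (a : 'I_(kn n) -> bool) : V :=
  \sum_(j < kn n) (a j)%:R *: e (2 * (n + j.+1))%N.

(* Main.v *)
Require Import Defs.
From HB Require Import structures.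
From mathcomp Require Import all_boot all_order all_algebra.
From mathcomp Require Import all_classical all_reals all_analysis.
From mathcomp Require Import zify ring lra.
Import Order.TTheory GRing.Theory Num.Theory.
Import numFieldNormedType.Exports.
Local Open Scope classical_set_scope.
Local Open Scope ring_scope.

Section Inner.
Variables (R : realType) (V : normedModType R) (inner : V -> V -> R).
Hypothesis hin : is_inner_product inner.

Lemma inner0l z : inner 0 z = 0.
Proof.
case: hin => _ hl _.
have := hl 1 0 0 z; rewrite scaler0 addr0 mul1r => h.
by apply/(addrI (inner 0 z)); rewrite addr0 -h.
Qed.

Lemma innerZl a x z : inner (a *: x) z = a * inner x z.
Proof. by case: hin => _ hl _; have := hl a x 0 z; rewrite !addr0 inner0l addr0. Qed.

Lemma innerDl x y z : inner (x + y) z = inner x z + inner y z.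
Proof. by case: hin => _ hl _; have := hl 1 x y z; rewrite scale1r mul1r. Qed.

Lemma inner_suml (I : finType) (a : I -> R) (v : I -> V) z :
  inner (\sum_i a i *: v i) z = \sum_i a i * inner (v i) z.
Proof.
elim/big_rec2: _ => [|i y1 y2 _ <-]; first exact: inner0l.
by rewrite innerDl innerZl.
Qed.

Lemma norm_sq x : `|x| ^+ 2 = inner x x.
Proof.
case: hin => _ _ hn; rewrite hn.
have [h|h] := leP 0 (inner x x); first by rewrite sqr_sqrtr.
have : `|x| = 0 by rewrite hn; apply/eqP; rewrite sqrtr_eq0 ltW.
move/normr0_eq0 => x0; move: h; by rewrite x0 inner0l ltxx.
Qed.

Lemma norm_sum_sq (e : nat -> V) k (x : 'I_k -> R) (sg : 'I_k -> nat) :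
  (forall i j : nat, (1 <= i)%N -> (1 <= j)%N ->
     inner (e i) (e j) = (if i == j then 1 else 0)) ->
  injective sg -> (forall j, 1 <= sg j)%N ->
  `|\sum_j x j *: e (sg j)| ^+ 2 = \sum_j x j ^+ 2.
Proof.
move=> he inj s1; rewrite norm_sq inner_suml; apply: eq_bigr => j _.
case: hin => hs _ _; rewrite hs inner_suml (bigD1 j) //= he // eqxx mulr1.
rewrite big1 ?addr0 ?expr2 // => l /negbTE lj.
by rewrite he // (inj_eq inj) lj mulr0.
Qed.
End Inner.
Lemma sum_split (R : realType) (F : nat -> R) w p :
  \sum_(j < w * p) F j = \sum_(i < w) \sum_(v < p) F (i * p + v)%N.
Proof.
elim: w => [|w IH]; first by rewrite mul0n !big_ord0.
by rewrite mulSnr big_split_ord /= IH big_ord_recr.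
Qed.

Lemma sum_eq1 (R : realType) p a : (a < p)%N ->
  \sum_(v < p) ((v == a :> nat)%:R : R) = 1.
Proof.
move=> ap; rewrite (bigD1 (Ordinal ap)) //= eqxx big1 ?addr0 // => v /negbTE.
by rewrite -(inj_eq val_inj) /= => ->.
Qed.

Lemma block_pair (R : realType) p a b : (a < p)%N -> (b < p)%N ->
  \sum_(v < p) (((v == a :> nat)%:R : R) - (v == b :> nat)%:R) ^+ 2
  = 2 * (a != b)%:R.
Proof.
move=> ap bp; case: (eqVneq a b) => [->|ne].
  by rewrite mulr0 big1 // => v _; rewrite subrr expr0n.
rewrite mulr1 (eq_bigr (fun v : 'I_p => (v == a :> nat)%:R + (v == b :> nat)%:R)).
  by rewrite big_split /= !sum_eq1.
move=> v _; case: eqP => [va|]; case: eqP => [vb|] //=;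
  rewrite ?mulr1n ?mulr0n.
- by move: ne; rewrite -va vb eqxx.
- by rewrite subr0 expr1n addr0.
- by rewrite sub0r sqrrN expr1n add0r.
- by rewrite subrr expr0n addr0.
Qed.

Lemma block_single (R : realType) p a : (a < p)%N ->
  \sum_(v < p) (0 - ((v == a :> nat)%:R : R)) ^+ 2 = 1.
Proof.
move=> ap; rewrite (eq_bigr (fun v : 'I_p => (v == a :> nat)%:R)) ?sum_eq1 // => v _.
by rewrite sub0r sqrrN; case: (_ == _); rewrite /= ?mulr1n ?mulr0n ?expr1n ?expr0n.
Qed.

Lemma sum_bool_count (T : eqType) (P : pred T) (s : seq T) :
  (\sum_(i <- s) (P i : nat))%N = count P s.
Proof. by elim: s => [|x s IH]; rewrite ?big_nil ?big_cons ?IH. Qed.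

Section Code.
Variables (p q : nat).
Hypothesis pp : prime p.
Hypothesis wp : (q.*2.+1 <= p)%N.
Local Notation w := q.*2.+1.
Local Notation h := q.+1.

Definition Pc (t : {ffun 'I_h -> 'F_p}) : {poly 'F_p} := \poly_(j < h) t (inord j).
Definition alpha (t : {ffun 'I_h -> 'F_p}) (i : nat) : nat :=
  nat_of_ord ((Pc t).[i%:R]).
Definition Av (t : {ffun 'I_h -> 'F_p}) (j : nat) : bool :=
  (j < w * p)%N && (alpha t (j %/ p)%N == (j %% p)%N).

Lemma alpha_lt t i : (alpha t i < p)%N.
Proof. by apply: (leq_trans (ltn_ord ((Pc t).[i%:R]))); rewrite (Fp_cast pp). Qed.

Lemma Av_block t i v : (i < w)%N -> (v < p)%N -> Av t (i * p + v) = (v == alpha t i).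
Proof.
move=> iw vp; have p0 : (0 < p)%N by apply: prime_gt0.
rewrite /Av divnMDl // divn_small // addn0 modnMDl modn_small // eq_sym.
have -> : (i * p + v < w * p)%N.
  by apply: (@leq_trans (i * p + p)); [rewrite ltn_add2l | rewrite -mulSnr leq_mul2r iw orbT].
by [].
Qed.

Lemma agree_bound (t u : {ffun 'I_h -> 'F_p}) : t != u ->
  (\sum_(i < w) (alpha t i == alpha u i) <= q)%N.
Proof.
move=> tu.
have agE i : (alpha t i == alpha u i) = ((Pc t).[i%:R] == (Pc u).[i%:R]).
  by rewrite /alpha (inj_eq val_inj).
rewrite (eq_bigr (fun i : 'I_w => ((Pc t).[i%:R] == (Pc u).[i%:R] : nat))); last first.
  by move=> i _; rewrite agE.
rewrite -(big_mkord xpredT (fun i => ((Pc t).[i%:R] == (Pc u).[i%:R] : nat))).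
rewrite /index_iota subn0 sum_bool_count.
set ag := (fun i : nat => _).
set rs := map (fun i : nat => (i%:R : 'F_p)) [seq i <- iota 0 w | ag i].
have nz : Pc t - Pc u != 0.
  apply: contra tu; rewrite subr_eq0 => /eqP E; apply/eqP/ffunP => j.
  by have := congr1 (fun P : {poly 'F_p} => P`_j) E; rewrite /Pc !coef_poly ltn_ord inord_val.
have := max_poly_roots nz (rs := rs).
have -> : size rs = count ag (iota 0 w) by rewrite size_map size_filter.
move=> H; have sz : (size (Pc t - Pc u)%R <= h)%N.
  rewrite (leq_trans (size_polyD _ _)) // size_polyN geq_max !size_poly //.
suff : (count ag (iota 0 w) < h)%N by [].
apply: (leq_trans _ sz); apply: H.
  apply/allP => x /mapP [i]; rewrite mem_filter => /andP [hi _] ->.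
  by rewrite /root hornerD hornerN subr_eq0.
rewrite map_inj_in_uniq ?filter_uniq ?iota_uniq // => i j.
rewrite !mem_filter !mem_iota !add0n => /andP [_ /andP [_ iw]] /andP [_ /andP [_ jw]].
move/(congr1 (fun x : 'F_p => nat_of_ord x)); rewrite !val_Fp_nat //.
by rewrite !modn_small //; apply: (leq_trans _ wp).
Qed.
End Code.

Lemma cube_diff (R : realType) (H : normedModType R) (inner : H -> H -> R)
  (e : nat -> H) n (eps : R) (a b : 'I_(kn n) -> bool) :
  is_inner_product inner ->
  (forall i j : nat, (1 <= i)%N -> (1 <= j)%N ->
     inner (e i) (e j) = (if i == j then 1 else 0)) ->
  `|eps *: cube_vertex e a - eps *: cube_vertex e b| ^+ 2 =
  eps ^+ 2 * \sum_(j < kn n) (((a j : nat)%:R : R) - (b j : nat)%:R) ^+ 2.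
Proof.
move=> hin he; rewrite -scalerBr normrZ exprMn real_normK ?num_real //; congr (_ * _).
rewrite /cube_vertex -sumrB.
rewrite (eq_bigr (fun j : 'I_(kn n) => (((a j : nat)%:R : R) - (b j : nat)%:R) *: e (2 * (n + j.+1))%N)); last first.
  by move=> j _; rewrite scalerBl.
rewrite (@norm_sum_sq R H inner hin e (kn n) _ (fun j : 'I_(kn n) => (2 * (n + j.+1))%N)) //.
- by move=> i j /= E; apply: val_inj; move: E; simpl; lia.
- by move=> j; lia.
Qed.

Lemma ltr_of_sqr (R : realType) (x y : R) : 0 <= x -> 0 <= y -> x ^+ 2 < y ^+ 2 -> x < y.
Proof. by move=> x0 y0; rewrite ltr_sqr ?nnegrE. Qed.

Lemma ler_of_sqr (R : realType) (x y : R) : 0 <= x -> 0 <= y -> x ^+ 2 <= y ^+ 2 -> x <= y.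
Proof. by move=> x0 y0; rewrite ler_sqr ?nnegrE. Qed.

Lemma pack (R : realType) (V : normedModType R) (T : finType) (f : T -> V)
  (X A : set V) (r : R) (s : seq V) :
  (forall t, A (f t)) -> (forall t u, t != u -> r <= `|f t - f u|) ->
  covers X A (r / 2) s -> (#|T| <= size s)%N.
Proof.
move=> fA fsep [_ cov].
have : forall t, exists x, x \in s /\ ball x (r / 2) (f t).
  by move=> t; have [x xs b] := cov _ (fA t); exists x.
move=> /choice [g hg].
have ginj : injective g.
  move=> t u gtu; apply/eqP; apply: contraT => tu.
  have := fsep _ _ tu; rewrite leNgt => /negP Hn; exfalso; apply: Hn.
  have [_ bt] := hg t; have [_ bu] := hg u.
  move: bt bu; rewrite -!ball_normE /= => bt bu.
  rewrite (le_lt_trans (ler_distD (g t) _ _)) // (splitr r) distrC.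
  by apply: ltrD => //; rewrite gtu.
rewrite cardE -(size_map g); apply: uniq_leq_size.
  by rewrite (map_inj_uniq ginj) enum_uniq.
by move=> x /mapP [t _ ->]; have [] := hg t.
Qed.

Lemma cover_num_ge (R : realType) (V : normedModType R) (T : finType) (f : T -> V)
  (X A : set V) (r : R) :
  (forall t, A (f t)) -> (forall t u, t != u -> r <= `|f t - f u|) ->
  (((#|T|)%:R)%:E <= cover_num (r / 2) A X)%E.
Proof.
move=> fA fsep; apply: le_ereal_inf_tmp => _ [s cs <-].
by rewrite lee_fin ler_nat; exact: (@pack R V T f X A r s fA fsep cs).
Qed.

Lemma sum_reindex (R : realType) (F : nat -> R) K w p : K = (w * p)%N ->
  \sum_(j < K) F j = \sum_(i < w) \sum_(v < p) F (i * p + v)%N.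
Proof. by move=> ->; exact: sum_split. Qed.

Lemma S_single (R : realType) p q (pp : prime p) (wp : (q.*2.+1 <= p)%N) K t :
  K = (q.*2.+1 * p)%N ->
  \sum_(j < K) (((false : nat)%:R : R) - ((Av p q t j : nat)%:R)) ^+ 2 = (q.*2.+1)%:R.
Proof.
move=> KE; rewrite (@sum_reindex R (fun j => (((false : nat)%:R : R) - ((Av p q t j : nat)%:R)) ^+ 2) _ _ _ KE).
rewrite (eq_bigr (fun=> 1)); first by rewrite sumr_const card_ord.
move=> i _; rewrite -[RHS](@block_single R p (alpha p q t i)); last exact: alpha_lt.
by apply: eq_bigr => v _; rewrite Av_block.
Qed.

Lemma S_pair (R : realType) p q (pp : prime p) (wp : (q.*2.+1 <= p)%N) K t u :
  K = (q.*2.+1 * p)%N -> t != u ->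
  (q.*2.+2)%:R <= \sum_(j < K) ((((Av p q t j : nat)%:R : R) - ((Av p q u j : nat)%:R)) ^+ 2).
Proof.
move=> KE tu; rewrite (@sum_reindex R (fun j => (((Av p q t j : nat)%:R : R) - ((Av p q u j : nat)%:R)) ^+ 2) _ _ _ KE).
rewrite (eq_bigr (fun i : 'I_q.*2.+1 => 2 * ((alpha p q t i != alpha p q u i : nat)%:R : R))); last first.
  move=> i _; rewrite -[RHS](@block_pair R p); try exact: alpha_lt.
  by apply: eq_bigr => v _; rewrite !Av_block.
have hb := @agree_bound p q pp wp t u tu.
have hs : (\sum_(i < q.*2.+1) (alpha p q t i != alpha p q u i : nat)
          + \sum_(i < q.*2.+1) (alpha p q t i == alpha p q u i : nat) = q.*2.+1)%N.
  rewrite -big_split /= (eq_bigr (fun=> 1%N)); first by rewrite sum1_card card_ord.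
  by move=> i _; case: eqP.
rewrite -mulr_sumr -natr_sum -[2]/(2%:R) -natrM ler_nat.
move: hs hb; set A := \sum_(i < q.*2.+1) (alpha p q t i != alpha p q u i : nat).
set Bs := \sum_(i < q.*2.+1) (alpha p q t i == alpha p q u i : nat).
rewrite -!addnn; lia.
Qed.

Lemma key (R : realType) (H : normedModType R) (inner : H -> H -> R) (e : nat -> H)
  (eps : nat -> R) (B : set H) n q p :
  is_inner_product inner ->
  (forall i j : nat, (1 <= i)%N -> (1 <= j)%N ->
     inner (e i) (e j) = (if i == j then 1 else 0)) ->
  prime p -> (q.*2.+1 <= p)%N -> kn n = (q.*2.+1 * p)%N -> 0 < eps n ->
  (forall a : 'I_(kn n) -> bool, B (eps n *: cube_vertex e a)) ->
  (((expn p q.+1)%:R)%:E <= doubling B (eps n * Num.sqrt (q.*2.+2)%:R))%E.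
Proof.
move=> hin he pp wp kE e0 hB.
set r := eps n * _.
have r0 : 0 <= r by rewrite mulr_ge0 ?sqrtr_ge0 // ltW.
have r2 : r ^+ 2 = eps n ^+ 2 * (q.*2.+2)%:R by rewrite exprMn sqr_sqrtr.
set x0 := eps n *: cube_vertex e (fun _ : 'I_(kn n) => false).
set f := fun t : {ffun 'I_q.+1 -> 'F_p} =>
  eps n *: cube_vertex e (fun j : 'I_(kn n) => Av p q t j).
apply: le_ereal_sup_tmp; exists (cover_num (r / 2) (ballX B r x0) B).
  by exists x0 => //; exact: hB.
rewrite [expn p q.+1](_ : _ = #|{ffun 'I_q.+1 -> 'F_p}|)%N; last by rewrite card_ffun !card_ord (Fp_cast pp).
apply: (@cover_num_ge R H _ f).
- move=> t; split; first exact: hB.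
  rewrite -ball_normE /=; apply: ltr_of_sqr => //.
  rewrite (@cube_diff R H inner e n (eps n) _ _ hin he) /= (@S_single R p q pp wp) // r2.
  by rewrite ltr_pM2l ?exprn_gt0 // ltr_nat.
- move=> t u tu; apply: ler_of_sqr => //.
  rewrite (@cube_diff R H inner e n (eps n) _ _ hin he) r2 ler_pM2l ?exprn_gt0 //.
  exact: S_pair.
Qed.

Theorem lemma3p4 (R : realType) (H : completeNormedModType R)
  (inner : H -> H -> R) (e : nat -> H)
  (gamma c C : R) (eps : nat -> R) (B : set H) (n0 : nat) :
  is_inner_product inner ->
  (forall i j : nat, (1 <= i)%N -> (1 <= j)%N ->
     inner (e i) (e j) = (if i == j then 1 else 0)) ->
  0 < gamma -> 0 < c -> c <= C ->
  (forall n : nat, 0 < eps n) ->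
  (forall n : nat, c * expR (- gamma * (n%:R ^+ 2)) <= eps n
                   /\ eps n <= C * expR (- gamma * (n%:R ^+ 2))) ->
  compact B ->
  (forall n : nat, (n0 <= n)%N ->
     forall a : 'I_(kn n) -> bool, B (eps n *: cube_vertex e a)) ->
  dimLogD B = +oo%E.
Proof.
move=> hin he g0 c0 cC e0 eb _ hB.
rewrite /dimLogD; apply/ereal_inf_pinfty => _ [d d0 <-] /=.
move: d0; rewrite /= => d0.
set S := [set logD_ratio B x | x in _].
suff hM : forall M : R, 0 < M -> exists2 x, 0 < x < d & (M%:E <= logD_ratio B x)%E.
  have ub := @ereal_sup_ubound R S.
  case E: (ereal_sup S) => [s| |] //.
  - have [x xr hx] := hM (`|s| + 1) (ltr_wpDl (normr_ge0 _) ltr01).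
    have := ub (logD_ratio B x) (ex_intro2 _ _ x xr erefl).
    rewrite E => /(le_trans hx); rewrite lee_fin => h.
    by move: h; rewrite leNgt (le_lt_trans (ler_norm s)) // ltrDl ltr01.
  - have [x xr hx] := hM 1 ltr01.
    have := ub (logD_ratio B x) (ex_intro2 _ _ x xr erefl).
    by rewrite E => /(le_trans hx).
move=> M M0.
pose q := Num.trunc (5 * M).
have qM : 5 * M < (q.+1)%:R by exact: truncnS_gt.
pose w := q.*2.+1.
pose s := Num.sqrt ((q.*2.+2)%:R : R).
have s1 : 1 <= s by rewrite -sqrtr1 ler_sqrt // ler1n.
pose K := `|ln c|.
pose B1 := C * s * (d^-1 + expR 1) / gamma.
pose B2 := gamma * (w%:R : R) ^+ 4 + K.
pose m := maxn n0 (maxn w (maxn (Num.trunc B1) (Num.trunc B2))).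
have [p mp pp] := prime_above m.
pose n := ((w * p) * (w * p))%N.
have kE : kn n = (w * p)%N by exact: PeanoNat.Nat.sqrt_square.
have p0 : (0 < p)%N by exact: prime_gt0.
have pn : (p <= n)%N by rewrite /n /w; nia.
have wp : (w <= p)%N by apply: ltnW; apply: leq_ltn_trans mp; rewrite /m leq_max leq_max leqnn orbT.
have n0n : (n0 <= n)%N.
  by apply: leq_trans pn; apply: ltnW; apply: leq_ltn_trans mp; rewrite /m leq_max leqnn.
have hkey := @key R H inner e eps B n q p hin he pp wp kE (e0 n) (hB n n0n).
pose r := eps n * s.
pose P : R := p%:R.
pose N : R := n%:R.
have P1 : 1 <= P by rewrite /P ler1n.
have PN : P <= N by rewrite /P /N ler_nat.
have PB1 : B1 < P.
  apply: (lt_le_trans (truncnS_gt B1)); rewrite /P ler_nat.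
  by apply: leq_ltn_trans mp; rewrite /m !leq_max leqnn !orbT.
have PB2 : B2 < P.
  apply: (lt_le_trans (truncnS_gt B2)); rewrite /P ler_nat.
  by apply: leq_ltn_trans mp; rewrite /m !leq_max leqnn !orbT.
pose E := expR (gamma * N ^+ 2).
have E0 : 0 < E by exact: expR_gt0.
have epsE : c / E <= eps n /\ eps n <= C / E.
  by have := eb n; rewrite mulNr expRN.
have C0 : 0 < C by exact: lt_le_trans cC.
have s0 : 0 < s by exact: lt_le_trans s1.
have r0 : 0 < r by rewrite mulr_gt0.
have e10 : 0 < expR 1 :> R by exact: expR_gt0.
have di0 : 0 < d^-1 by rewrite invr_gt0.
have EB : C * s * (d^-1 + expR 1) < E.
  have h1 : gamma * P <= gamma * N ^+ 2 by rewrite ler_pM2l //; nra.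
  have h2 : C * s * (d^-1 + expR 1) < P * gamma by rewrite -ltr_pdivrMr.
  have h3 := expR_ge1Dx (gamma * N ^+ 2).
  rewrite /E; lra.
have rinv : E / (C * s) <= r^-1.
  have : r <= C * s / E.
    rewrite /r mulrAC; apply: ler_wpM2r; first exact: ltW.
    by case: epsE.
  move=> h; rewrite -[E / _]invf_div lef_pV2 ?posrE ?divr_gt0 ?mulr_gt0 //.
have rinvB : d^-1 + expR 1 < r^-1.
  apply: lt_le_trans rinv; rewrite ltr_pdivlMr ?mulr_gt0 //; lra.
have rd : r < d.
  rewrite -[d]invrK -[r]invrK ltf_pV2 ?posrE ?invr_gt0 //; lra.
have lr1 : 1 < ln r^-1.
  rewrite -[1]expRK ltr_ln ?posrE ?invr_gt0 //; lra.
have rinv2 : r^-1 <= E / c.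
  have : c / E <= r.
    rewrite /r; apply: (le_trans (proj1 epsE)); rewrite ler_peMr //.
    by rewrite ltW // (lt_le_trans _ (proj1 epsE)) // divr_gt0.
  move=> h; rewrite -[E / c]invf_div lef_pV2 ?posrE ?divr_gt0 //.
have lnr : ln r^-1 <= gamma * N ^+ 2 + K.
  apply: (le_trans (y := ln (E / c))).
    by rewrite ler_ln ?posrE ?invr_gt0 ?divr_gt0.
  rewrite lnM ?posrE ?invr_gt0 // lnV ?posrE // /E expRK.
  by rewrite lerD2l /K -normrN ler_norm.
have N2 : N ^+ 2 = (w%:R : R) ^+ 4 * P ^+ 4.
  by rewrite /N /n /P !natrM; ring.
have K0 : 0 <= K by exact: normr_ge0.
have lnP5 : ln r^-1 <= P ^+ 5.
  apply: (le_trans lnr); rewrite N2.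
  have Y1 : 1 <= P ^+ 4 by rewrite exprn_ege1.
  have -> : P ^+ 5 = P * P ^+ 4 by rewrite exprS.
  move: PB2; rewrite /B2 => PB2.
  have W0 : 0 < (w%:R : R) ^+ 4 by rewrite exprn_gt0 // ltr0n.
  move: Y1 PB2 W0 K0 g0; generalize (P ^+ 4) ((w%:R : R) ^+ 4) => Y W *; nra.
have lnP0 : 0 < ln P.
  by apply: ln_gt0; rewrite /P ltr1n prime_gt1.
have L0 : 0 < ln (ln r^-1) by apply: ln_gt0.
have L5 : ln (ln r^-1) <= ln P *+ 5.
  have P0 : 0 < P by exact: lt_le_trans ltr01 P1.
  rewrite -lnXn //.
  by rewrite ler_ln ?posrE ?exprn_gt0 //; exact: lt_trans ltr01 lr1.
exists r; first by rewrite r0 rd.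
rewrite /logD_ratio; move: hkey; rewrite -/s -/r.
case: (doubling B r) => [x| |] // hx; last exact: leey.
rewrite lee_fin ler_pdivlMr //.
move: hx; rewrite lee_fin => hx.
have Ppos : 0 < (expn p q.+1)%:R :> R by rewrite ltr0n expn_gt0 p0.
have lx : ln P *+ q.+1 <= ln x.
  rewrite -lnXn ?ltr0n // -natrX ler_ln ?posrE //.
  exact: lt_le_trans hx.
rewrite -mulr_natr in lx; rewrite -mulr_natr in L5.
rewrite /=; nra.
Qed.
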